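(* Let $\mathcal{S}\subset\overline{\mathbb{M}}$ be a finite set. Then there is an integer $e_0$ such that for all $e\ge e_0$, $$\big|\Delta^{(m-1)}_e(\mathcal{S})\setminus\Delta^{(m-1)}_e(\phi(\mathcal{S}))\big|\le\big|\Delta^{(m)}_e(\phi(\mathcal{S}))\setminus\Delta^{(m)}_e(\mathcal{S})\big|.$$
   Context: $q$ is a prime power, $m$ a positive integer. A monomial $\mu\neq1$ in $x_0,\dots,x_m$ written $x_0^{a_0}\cdots x_k^{a_k}$ with $a_k>0$ is projectively reduced if $a_0,\dots,a_{k-1}\le q-1$; $1$ is projectively reduced. $\overline{\mathbb{M}}$ is the set of projectively reduced monomials, $\overline{\mathbb{M}}_e$ those of degree $e$. $\overline{\mathbb{M}}^{(0)}=\{x_0^a:a\ge0\}$, and for $1\le\ell\le m$, $\overline{\mathbb{M}}^{(\ell)}=\{x_0^{a_0}\cdots x_\ell^{a_\ell}\in\overline{\mathbb{M}}:a_\ell>0\}$; $\overline{\mathbb{M}}^{(\ell)}_e=\overline{\mathbb{M}}^{(\ell)}\cap\overline{\mathbb{M}}_e$. For a set $\mathcal{S}$ of monomials, $\Delta_e(\mathcal{S})=\{\mu\in\overline{\mathbb{M}}_e:\text{no }\nu\in\mathcal{S}\text{ divides }\mu\}$ and $\Delta^{(\ell)}_e(\mathcal{S})=\Delta_e(\mathcal{S})\cap\overline{\mathbb{M}}^{(\ell)}_e$. Given $\mathcal{S}\subseteq\overline{\mathbb{M}}$, for $\mu=x_0^{i_0}\cdots x_m^{i_m}\in\mathcal{S}$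 set $\phi(\mu)=\mu x_{m-1}/x_m$ if $x_0^{i_0}\cdots x_{m-2}^{i_{m-2}}x_{m-1}^{i_{m-1}+i_m}\notin\mathcal{S}$ and $i_{m-1}+1<q$, and $\phi(\mu)=\mu$ otherwise; $\phi(\mathcal{S})$ is the image. *)

(* Defs.v *)
From mathcomp Require Import all_boot.

(* A monomial x_0^{a_0} ... x_m^{a_m} is represented by its exponent vector. *)
Definition mono (m : nat) := {ffun 'I_m.+1 -> nat}.

Definition mdeg (m : nat) (mu : mono m) : nat := \sum_(i < m.+1) mu i.

Definition mdvd (m : nat) (nu mu : mono m) : bool := [forall i, nu i <= mu i].

Definition proj_reduced (q m : nat) (mu : mono m) : bool :=
  [forall i : 'I_m.+1, forall j : 'I_m.+1,
     ((i < j) && (0 < mu j)) ==> (mu i <= q - 1)].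

Definition inMl (q m l : nat) (mu : mono m) : bool :=
  if l == 0 then [forall i : 'I_m.+1, (0 < i) ==> (mu i == 0)]
  else [&& proj_reduced q m mu,
          [forall i : 'I_m.+1, (l < i) ==> (mu i == 0)] &
          [exists i : 'I_m.+1, (nat_of_ord i == l) && (0 < mu i)]].

Definition inDelta (q m e : nat) (S : seq (mono m)) (mu : mono m) : bool :=
  [&& proj_reduced q m mu, mdeg m mu == e & ~~ has (fun nu => mdvd m nu mu) S].

Definition inDeltaL (q m l e : nat) (S : seq (mono m)) (mu : mono m) : bool :=
  inDelta q m e S mu && inMl q m l mu.

(* exponent vectors bounded by e, mapped injectively into monomials; every
   monomial of degree e arises exactly once. *)
Definition of_bounded (m e : nat) (a : {ffun 'I_m.+1 -> 'I_e.+1}) : mono m :=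
  [ffun i => nat_of_ord (a i)].

Definition count_deg (m e : nat) (P : mono m -> bool) : nat :=
  #|[set a : {ffun 'I_m.+1 -> 'I_e.+1} |
      (mdeg m (of_bounded m e a) == e) && P (of_bounded m e a)]|.

Definition idx_m1 (m : nat) : 'I_m.+1 := inord m.-1.
Definition idx_m (m : nat) : 'I_m.+1 := ord_max.

Definition collapse (m : nat) (mu : mono m) : mono m :=
  [ffun i => if i == idx_m1 m then mu (idx_m1 m) + mu (idx_m m)
             else if i == idx_m m then 0 else mu i].

(* mu x_{m-1} / x_m (only used when i_m > 0) *)
Definition shift (m : nat) (mu : mono m) : mono m :=
  [ffun i => if i == idx_m1 m then (mu i).+1
             else if i == idx_m m then (mu i).-1 else mu i].

Definition phi (q m : nat) (S : seq (mono m)) (mu : mono m) : mono m :=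
  if (collapse m mu \notin S) && ((mu (idx_m1 m)).+1 < q) then shift m mu else mu.

Definition phiS (q m : nat) (S : seq (mono m)) : seq (mono m) := map (phi q m S) S.

(* Main.v *)
Require Import Defs.
From mathcomp Require Import all_boot zify.

Lemma idx_m1_val m : 0 < m -> nat_of_ord (idx_m1 m) = m.-1.
Proof. move=> hm; rewrite /idx_m1 inordK //; lia. Qed.

Lemma idx_m_val m : nat_of_ord (idx_m m) = m.
Proof. by []. Qed.

Lemma ord_cases m (i : 'I_m.+1) : 0 < m ->
  [|| i < m.-1, i == idx_m1 m | i == idx_m m].
Proof.
move=> hm; rewrite -!val_eqE /= idx_m1_val //.
have := ltn_ord i; lia.
Qed.

Lemma idx_neq m : 0 < m -> (idx_m1 m == idx_m m) = false.
Proof. move=> hm; rewrite -val_eqE /= idx_m1_val //; lia. Qed.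

Lemma coord_le_mdeg m (r : mono m) i : r i <= mdeg m r.
Proof. by rewrite /mdeg (bigD1 i) //= leq_addr. Qed.

Lemma mdeg_le_sum m (S : seq (mono m)) r : r \in S -> mdeg m r <= \sum_(x <- S) mdeg m x.
Proof. by move=> h; rewrite (big_rem r h) /= leq_addr. Qed.

Lemma of_bounded_inj m e : injective (of_bounded m e).
Proof.
move=> a b h; apply/ffunP => i; apply/val_inj.
by have := congr1 (fun f : mono m => f i) h; rewrite /of_bounded !ffunE.
Qed.

Definition to_b m e (u : mono m) : {ffun 'I_m.+1 -> 'I_e.+1} := [ffun i => inord (u i)].

Lemma to_bK m e u : mdeg m u = e -> of_bounded m e (to_b m e u) = u.
Proof.
move=> h; apply/ffunP => i; rewrite /of_bounded /to_b !ffunE inordK //.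
by rewrite ltnS -h coord_le_mdeg.
Qed.

Lemma count_deg_inj m e (P Q : mono m -> bool) (f : mono m -> mono m) :
  (forall u, mdeg m u = e -> P u -> mdeg m (f u) = e /\ Q (f u)) ->
  (forall u v, mdeg m u = e -> P u -> mdeg m v = e -> P v -> f u = f v -> u = v) ->
  count_deg m e P <= count_deg m e Q.
Proof.
move=> hf hi; rewrite /count_deg.
set A := [set a | _]; set B := [set a | _].
pose g a := to_b m e (f (of_bounded m e a)).
rewrite -(card_in_imset (f := g)); last first.
  move=> a b; rewrite !inE => /andP[/eqP ha pa] /andP[/eqP hb pb].
  rewrite /g => hab.
  have := congr1 (of_bounded m e) hab.
  have [d1 _] := hf _ ha pa; have [d2 _] := hf _ hb pb.
  rewrite !to_bK // => /(hi _ _ ha pa hb pb); exact: of_bounded_inj.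
apply: subset_leq_card; apply/subsetP => y /imsetP[a]; rewrite inE => /andP[/eqP ha pa] ->.
have [d1 q1] := hf _ ha pa.
by rewrite inE /g to_bK // d1 eqxx q1.
Qed.


Lemma left_facts q m e S u : 0 < m ->
  inDeltaL q m m.-1 e S u && ~~ inDeltaL q m m.-1 e (phiS q m S) u ->
  [/\ proj_reduced q m u, mdeg m u = e, ~~ has (fun nu => mdvd m nu u) S,
      u (idx_m m) = 0
    & (forall i : 'I_m.+1, i < m.-1 -> u i <= q - 1)
      /\ has (fun nu => mdvd m (phi q m S nu) u) S].
Proof.
move=> hm /andP[/andP[/and3P[pr /eqP de nS] ml] ndl].
have hphi : has (fun nu => mdvd m (phi q m S nu) u) S.
  move: ndl; rewrite /inDeltaL ml andbT /inDelta pr de eqxx /= negbK /phiS.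
  by rewrite has_map.
have [h0 hb] : u (idx_m m) = 0 /\ (forall i : 'I_m.+1, i < m.-1 -> u i <= q - 1).
  move: ml; rewrite /inMl; case: eqP => [m0 | m0].
    move=> /forallP h; split; last by move=> i; rewrite m0.
    by apply/eqP; have := h (idx_m m); move/implyP; apply => /=; lia.
  case/and3P=> _ /forallP h /existsP[j /andP[/eqP hj pj]]; split.
    by apply/eqP; have := h (idx_m m); move/implyP; apply => /=; lia.
  move=> i hi; move/forallP: pr => /(_ i) /forallP /(_ j) /implyP; apply.
  by rewrite hj hi pj.
by split.
Qed.

Definition pre_le m (r u : mono m) := [forall i : 'I_m.+1, (i < m.-1) ==> (r i <= u i)].
Definition Pc m S (u : mono m) c := has (fun r => pre_le m r u && (r (idx_m1 m) <= c)) S.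
Definition c0 q m S (u : mono m) := find (Pc m S u) (iota 0 q).

Lemma c0_le q m S u c : c < q -> Pc m S u c -> c0 q m S u <= c.
Proof.
move=> hc hp; rewrite leqNgt; apply/negP => hlt.
have := before_find 0 hlt; rewrite nth_iota // add0n hp //.
Qed.

Lemma c0_spec q m S u : c0 q m S u < q -> Pc m S u (c0 q m S u).
Proof.
move=> hc; have hs : has (Pc m S u) (iota 0 q) by rewrite has_find size_iota.
by have := nth_find 0 hs; rewrite nth_iota.
Qed.

Lemma c0_min q m S u r : r \in S -> pre_le m r u -> c0 q m S u <= q -> c0 q m S u <= r (idx_m1 m).
Proof.
move=> rS pr hq; rewrite leqNgt; apply/negP => hlt.
have := before_find 0 hlt; rewrite nth_iota ?add0n; last by lia.
by move/negbT/negP; apply; apply/hasP; exists r => //; rewrite pr leqnn.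
Qed.


Definition fmap q m S (u : mono m) : mono m :=
  [ffun i => if i == idx_m1 m then c0 q m S u
             else if i == idx_m m then u (idx_m1 m) - c0 q m S u else u i].

Definition KS m (S : seq (mono m)) := \sum_(x <- S) mdeg m x.

Lemma KS_bound m S (r : mono m) i : r \in S -> r i <= KS m S.
Proof. move=> h; apply: leq_trans (coord_le_mdeg _ r i) _; exact: mdeg_le_sum. Qed.

Lemma lt_other m (i : 'I_m.+1) : 0 < m -> i < m.-1 -> (i == idx_m1 m) = false /\ (i == idx_m m) = false.
Proof.
move=> hm hi; rewrite -!val_eqE /= idx_m1_val //; split; apply/negbTE; lia.
Qed.

Lemma phi_other q m S (s : mono m) (i : 'I_m.+1) : 0 < m -> i < m.-1 -> phi q m S s i = s i.
Proof.
move=> hm hi; have [h1 h2] := lt_other _ _ hm hi.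
by rewrite /phi; case: ifP => _ //; rewrite ffunE h1 h2.
Qed.

Lemma mdeg_bound q m (u : mono m) : (forall i : 'I_m.+1, i != idx_m1 m -> u i <= q) ->
  mdeg m u <= m.+1 * q + u (idx_m1 m).
Proof.
move=> h; rewrite /mdeg (bigD1 (idx_m1 m)) //= addnC leq_add2r.
apply: (@leq_trans (\sum_(i < m.+1 | i != idx_m1 m) q)); first exact: leq_sum.
rewrite sum_nat_const leq_mul2r; apply/orP; right.
by apply: leq_trans (max_card _) _; rewrite card_ord.
Qed.

Lemma mdeg_fmap q m S (u : mono m) : 0 < m -> u (idx_m m) = 0 -> c0 q m S u <= u (idx_m1 m) ->
  mdeg m (fmap q m S u) = mdeg m u.
Proof.
move=> hm h0 hc; have hn : idx_m m != idx_m1 m by rewrite eq_sym idx_neq.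
rewrite /mdeg (bigD1 (idx_m1 m)) //= [in RHS](bigD1 (idx_m1 m)) //=.
rewrite (bigD1 (idx_m m)) //= [in RHS](bigD1 (idx_m m)) //=.
rewrite !ffunE eqxx (negbTE hn) eqxx h0 addnA subnKC // add0n.
congr (_ + _); apply: eq_bigr => i /andP[h1 h2]; rewrite ffunE (negbTE h1) (negbTE h2) //.
Qed.


Lemma shiftE m (s : mono m) i : shift m s i =
  if i == idx_m1 m then (s i).+1 else if i == idx_m m then (s i).-1 else s i.
Proof. by rewrite /shift ffunE. Qed.

Lemma main_step q m e S u : 0 < m -> m.+1 * q + q + 2 * KS m S + 1 <= e ->
  inDeltaL q m m.-1 e S u && ~~ inDeltaL q m m.-1 e (phiS q m S) u ->
  [/\ mdeg m (fmap q m S u) = e,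
      inDeltaL q m m e (phiS q m S) (fmap q m S u) && ~~ inDeltaL q m m e S (fmap q m S u),
      u (idx_m m) = 0 & c0 q m S u <= u (idx_m1 m)].
Proof.
move=> hm he hL.
have [pr de nS h0 [hb hphi]] := left_facts _ _ _ _ _ hm hL; clear hL.
set K := KS m S in he.
have hn : (idx_m1 m == idx_m m) = false by rewrite idx_neq.
have hn' : (idx_m m == idx_m1 m) = false by rewrite eq_sym idx_neq.
case/hasP: hphi => nu nuS.
rewrite /phi; case: ifP => [/andP[ncol nuq] dnu | _ dnu]; last first.
  by case/negP: nS; apply/hasP; exists nu.
have pnu : pre_le m nu u.
  apply/forallP => i; apply/implyP => hi.
  have [h1 h2] := lt_other _ _ hm hi.
  by move/forallP: dnu => /(_ i); rewrite ffunE h1 h2.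
set c := c0 q m S u.
have hcnu : c <= nu (idx_m1 m).
  apply: c0_le; first by apply: leq_trans nuq.
  by apply/hasP; exists nu => //; rewrite pnu leqnn.
have hcq : c.+1 < q by apply: leq_ltn_trans nuq; rewrite ltnS.
have [rho rhoS /andP[prho rhoc]] := hasP (c0_spec q m S u (ltnW hcq)).
have hbig : m.+1 * q + u (idx_m1 m) >= e.
  rewrite -de; apply: mdeg_bound => i hi.
  have := ord_cases m i hm; rewrite (negbTE hi) /= => /orP[/hb hi' | /eqP ->].
    by apply: leq_trans hi' _; exact: leq_subr.
  by rewrite h0.
have hcu : c <= u (idx_m1 m).
  move: hbig he hcq; clear; lia.
have hU : q + 2 * K + 1 <= u (idx_m1 m) by move: hbig he; clear; lia.
split => //.
  rewrite mdeg_fmap //.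
have vE : forall i, fmap q m S u i = if i == idx_m1 m then c
             else if i == idx_m m then u (idx_m1 m) - c else u i.
  by move=> i; rewrite ffunE.
have prv : proj_reduced q m (fmap q m S u).
  apply/forallP => i; apply/forallP => j; apply/implyP => /andP[hij _].
  have := ord_cases m i hm; case/or3P => [hi | /eqP -> | /eqP hi].
  - by have [h1 h2] := lt_other _ _ hm hi; rewrite vE h1 h2 hb.
  - by rewrite vE eqxx; move: hcq; clear; lia.
  - by move: hij; rewrite hi /=; have := ltn_ord j; clear; lia.
have dv : mdeg m (fmap q m S u) = e by rewrite mdeg_fmap.
have hSv : has (fun nu => mdvd m nu (fmap q m S u)) S.
  apply/hasP; exists rho => //; apply/forallP => i.
  have := ord_cases m i hm; case/or3P => [hi | /eqP -> | /eqP ->].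
  - have [h1 h2] := lt_other _ _ hm hi; rewrite vE h1 h2.
    by move/forallP: prho => /(_ i) /implyP; apply.
  - by rewrite vE eqxx.
  - rewrite vE hn' eqxx; have := KS_bound m S rho (idx_m m) rhoS; rewrite -/K.
    move: hU hcq; clear; lia.
have mlv : inMl q m m (fmap q m S u).
  rewrite /inMl; have -> : (m == 0) = false by move: hm; clear; lia.
  rewrite prv /=; apply/andP; split.
    by apply/forallP => i; apply/implyP; have := ltn_ord i; clear; lia.
  apply/existsP; exists (idx_m m); rewrite /= eqxx vE hn' eqxx /=.
  move: hU hcq; clear; lia.
have nphi : ~~ has (fun nu => mdvd m nu (fmap q m S u)) (phiS q m S).
  apply/hasP => -[w /mapP[s sS ->] ds].
  have ps : pre_le m s u.
    apply/forallP => i; apply/implyP => hi.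
    have [h1 h2] := lt_other _ _ hm hi.
    move/forallP: ds => /(_ i); rewrite phi_other // vE h1 h2 //.
  have hcs : c <= s (idx_m1 m) by apply: c0_min => //; apply: ltnW; apply: ltnW.
  move/forallP: ds => /(_ (idx_m1 m)); rewrite vE eqxx /phi.
  case: ifP => [_ | hcond hsc].
    rewrite shiftE eqxx => hh; move: hh hcs; clear => h1 /(leq_trans h1); by rewrite ltnn.
  have colS : collapse m s \in S.
    apply/negPn/negP => hns; move: hcond; rewrite hns /=.
    have -> // : (s (idx_m1 m)).+1 < q.
    by apply: leq_ltn_trans hcq; rewrite ltnS.
  case/negP: nS; apply/hasP; exists (collapse m s) => //.
  apply/forallP => i; rewrite ffunE.
  have := ord_cases m i hm; case/or3P => [hi | /eqP -> | /eqP ->].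
  - have [h1 h2] := lt_other _ _ hm hi; rewrite h1 h2.
    by move/forallP: ps => /(_ i) /implyP; apply.
  - rewrite eqxx; have := KS_bound m S s (idx_m1 m) sS.
    have := KS_bound m S s (idx_m m) sS; rewrite -/K.
    move: hU; clear; lia.
  - by rewrite hn' eqxx.
by rewrite /inDeltaL /inDelta prv dv eqxx nphi mlv hSv.
Qed.


Lemma recover q m S (u : mono m) : 0 < m -> u (idx_m m) = 0 -> c0 q m S u <= u (idx_m1 m) ->
  forall i, u i = if i == idx_m1 m then fmap q m S u (idx_m1 m) + fmap q m S u (idx_m m)
                  else if i == idx_m m then 0 else fmap q m S u i.
Proof.
move=> hm h0 hc i; have hn' : (idx_m m == idx_m1 m) = false by rewrite eq_sym idx_neq.
rewrite !ffunE eqxx hn' eqxx subnKC //.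
case: eqP => [-> // | _]; case: eqP => [-> // | _].
by [].   
Qed.

Theorem proposition4p10 (q m : nat)
  (hq : exists p k, [/\ prime p, 0 < k & q = p ^ k]) (hm : 0 < m)
  (S : seq (mono m)) (hS : all (proj_reduced q m) S) :
  exists e0 : nat, forall e : nat, e0 <= e ->
    count_deg m e (fun mu => inDeltaL q m m.-1 e S mu
                             && ~~ inDeltaL q m m.-1 e (phiS q m S) mu)
    <= count_deg m e (fun mu => inDeltaL q m m e (phiS q m S) mu
                                && ~~ inDeltaL q m m e S mu).
Proof.
exists (m.+1 * q + q + 2 * KS m S + 1) => e he.
apply: (count_deg_inj _ _ _ _ (fmap q m S)).
  move=> u _ hu; have [d1 r1 _ _] := main_step q m e S u hm he hu; by split.
move=> u v _ hu _ hv huv.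
have [_ _ u0 uc] := main_step q m e S u hm he hu.
have [_ _ v0 vc] := main_step q m e S v hm he hv.
apply/ffunP => i; rewrite (recover _ _ _ _ hm u0 uc i) (recover _ _ _ _ hm v0 vc i).
by rewrite huv.
Qed.
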